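(* Let $n_1,n_2,n_3$ be integers with $3\le n_1,n_2\le n_3$ and $3\max(n_1,n_2)\le 2n_3\le n_1n_2$. Let $W$ be any set produced by the Middle Cone Construction described below and $u=(n_1+1,n_2+1,n_3+1)$. Then $W$ is a total-dominating set of $K_{n_1}\times K_{n_2}\times K_{n_3}$, and $W\cup\{u\}$ is a total-dominating set of $K_{n_1+1}\times K_{n_2+1}\times K_{n_3+1}$.
   Context: $K_{m_1}\times K_{m_2}\times K_{m_3}$: vertices are triples $(x_1,x_2,x_3)$, $1\le x_i\le m_i$, adjacent iff they differ in every coordinate. A total-dominating set is a vertex set $D$ such that every vertex of the graph is adjacent to some vertex of $D$. Multiplicities: write $n_3=qn_1+r$, $0\le r\le n_1-1$. If $r\le n_1-r$, $(\ell_1,\dots,\ell_{n_1})$ is $(q+1,q)$ repeated $r$ times followed by $n_1-2r$ copies of $q$; if $r>n_1-r$, it is $(q+1,q)$ repeated $n_1-r$ times followed by $2r-n_1$ copies of $q+1$. Let $L_i=\sum_{j<i}\ell_j$; block $i$ is the set of columns $c$ with $L_i<c\le L_i+\ell_i$; $s_i=L_i+1$. Middle Cone Construction: $W=W^L\cup W^R$, each consisting of $n_3$ landmarks indexed by columns $c=1,\dots,n_3$. Left column $c$ in block $i$ is $(i,y^L_c,c)$; right column $c$ in block $i$ is $(i+1,y^R_c,c)$ with $n_1+1$ read as $1$. Even $n_2$, $h=n_2/2$: $y^L_c=((c-1)\bmod h)+1$, $y^R_c=h+((c-1)\bmod h)+1$. Odd $n_2$, $f=(n_2-1)/2$, $k=\#\{i:\ell_i>f\}$: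 let $S=\{s_i:\ell_i>f\}$ if $k\ge2$ and $S=\{1\}$ if $k\le1$. Set $y^L_c=n_2$ for $c\in S$ and fill the other left columns in increasing order with $1,\dots,f,1,\dots,f,\dots$; set $y^R_c=n_2$ for $c\in S+1$ and fill the other right columns in increasing order with $f+1,\dots,2f,f+1,\dots,2f,\dots$. If $k\le1$, additionally change one left landmark of the form $(x,1,z)$ with $x\notin\{1,2,n_1\}$ to $(x,n_2,z)$ (any such choice). *)

(* Defs.v *)
From mathcomp Require Import all_boot.
Set Implicit Arguments. Unset Strict Implicit. Unset Printing Implicit Defensive.

Definition vtx := (nat * nat * nat)%type.

Definition is_vertex (m1 m2 m3 : nat) (v : vtx) : Prop :=
  [/\ 0 < v.1.1 <= m1, 0 < v.1.2 <= m2 & 0 < v.2 <= m3].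

Definition adj (v w : vtx) : Prop :=
  [/\ v.1.1 <> w.1.1, v.1.2 <> w.1.2 & v.2 <> w.2].

Definition total_dominating (m1 m2 m3 : nat) (D : vtx -> Prop) : Prop :=
  (forall v, D v -> is_vertex m1 m2 m3 v) /\
  (forall v, is_vertex m1 m2 m3 v -> exists w, D w /\ adj v w).

Section MCC.
Variables n1 n2 n3 : nat.

Definition mq := n3 %/ n1.
Definition mr := n3 %% n1.
(* number of (q+1,q) pairs at the start *)
Definition npairs := if mr <= n1 - mr then mr else n1 - mr.

Definition ell (i : nat) : nat :=
  if i <= 2 * npairs then (if odd i then mq.+1 else mq)
  else (if mr <= n1 - mr then mq else mq.+1).

Definition Lsum (i : nat) : nat := \sum_(1 <= j < i) ell j.

Definition in_block (i c : nat) : bool :=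
  (0 < i <= n1) && (Lsum i < c <= Lsum i + ell i).

Definition sblk (i : nat) : nat := (Lsum i).+1.

Definition hh := n2 %/ 2.
Definition yL_even (c : nat) : nat := (c.-1 %% hh).+1.
Definition yR_even (c : nat) : nat := hh + (c.-1 %% hh).+1.

Definition ff := n2.-1 %/ 2.
Definition kk := count (fun i => ff < ell i) (iota 1 n1).
Definition inS (c : nat) : bool :=
  if 2 <= kk then has (fun i => (ff < ell i) && (c == sblk i)) (iota 1 n1)
  else c == 1.
Definition inS1 (c : nat) : bool := (1 < c) && inS c.-1.

(* other columns filled in increasing order with 1..f,1..f,... *)
Definition yL_odd (c : nat) : nat :=
  if inS c then n2
  else (count (fun c' => ~~ inS c') (iota 1 c.-1) %% ff).+1.
(* other columns filled in increasing order with f+1..2f,f+1..2f,... *)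
Definition yR_odd (c : nat) : nat :=
  if inS1 c then n2
  else ff + (count (fun c' => ~~ inS1 c') (iota 1 c.-1) %% ff).+1.

Definition cone_set (yL yR : nat -> nat) (v : vtx) : Prop :=
  exists c i, 0 < c <= n3 /\ in_block i c /\
    (v = (i, yL c, c) \/ v = ((if i == n1 then 1 else i.+1), yR c, c)).

Definition middle_cone (W : vtx -> Prop) : Prop :=
  if ~~ odd n2 then (forall v, W v <-> cone_set yL_even yR_even v)
  else if 2 <= kk then (forall v, W v <-> cone_set yL_odd yR_odd v)
  else
    (* k <= 1: change one left landmark (x,1,z) with x \notin {1,2,n1}
       to (x,n2,z) (any such choice) *)
    exists c0 x0, [/\ 0 < c0 <= n3, in_block x0 c0, yL_odd c0 = 1,
       x0 \notin [:: 1; 2; n1] &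
       forall v, W v <->
         cone_set (fun c => if c == c0 then n2 else yL_odd c) yR_odd v].

End MCC.

(* Main.v *)
Require Import Defs.
From mathcomp Require Import all_boot zify.
Set Implicit Arguments. Unset Strict Implicit.

Lemma Lsum_rec n1 n3 i : 0 < i -> Lsum n1 n3 i.+1 = Lsum n1 n3 i + ell n1 n3 i.
Proof. by move=> hi; rewrite /Lsum big_nat_recr. Qed.

Lemma Lsum1 n1 n3 : Lsum n1 n3 1 = 0.
Proof. by rewrite /Lsum big_geq. Qed.

Lemma Lsum_mono n1 n3 i j : 0 < i -> i <= j -> Lsum n1 n3 i <= Lsum n1 n3 j.
Proof.
move=> hi; elim: j => [|j IH] hij; first by lia.
case: (eqVneq i j.+1) => [->//|ne].
have hj : i <= j by lia.
rewrite Lsum_rec; last by lia.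
by apply: leq_trans (IH hj) _; apply: leq_addr.
Qed.

Lemma block_uniq n1 n3 i j c : in_block n1 n3 i c -> in_block n1 n3 j c -> i = j.
Proof.
rewrite /in_block.
wlog: i j / i <= j => [H|hij].
  move=> a b; case: (leqP i j) => h; first exact: H h a b.
  by apply/esym; apply: H b a; lia.
move=> /andP[/andP[i0 _] /andP[h1 h2]] /andP[_ /andP[h3 h4]].
case: (eqVneq i j) => // ne.
have : Lsum n1 n3 i.+1 <= Lsum n1 n3 j by apply: Lsum_mono; lia.
rewrite Lsum_rec //; lia.
Qed.

Lemma ell_bounds n1 n3 i : n3 %/ n1 <= ell n1 n3 i <= (n3 %/ n1).+1.
Proof. rewrite /ell /mq; repeat case: ifP => _; lia. Qed.

Lemma npairs_le n1 n3 : 2 * npairs n1 n3 <= n1.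
Proof. rewrite /npairs; case: ifP => h; lia. Qed.

Lemma Lsum_pairs n1 n3 k : k <= npairs n1 n3 ->
  Lsum n1 n3 (2 * k).+1 = k * (2 * (n3 %/ n1) + 1).
Proof.
elim: k => [|k IH] hk; first by rewrite Lsum1.
have e : (2 * k.+1).+1 = (2 * k).+3 by lia.
rewrite e Lsum_rec // Lsum_rec // IH; last by lia.
have o1 : odd (2 * k).+1 by rewrite oddS oddM.
have o2 : ~~ odd (2 * k).+2 by rewrite !oddS oddM.
rewrite /ell /mq; rewrite (negbTE o2) o1.
have -> : (2 * k).+1 <= 2 * npairs n1 n3 by lia.
have -> : (2 * k).+2 <= 2 * npairs n1 n3 by lia.
lia.
Qed.

Lemma Lsum_total n1 n3 : 0 < n1 -> Lsum n1 n3 n1.+1 = n3.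
Proof.
move=> n1p.
have hp := npairs_le n1 n3.
set p := npairs n1 n3 in hp *.
rewrite /Lsum (big_cat_nat (n := (2 * p).+1)) //=.
rewrite -/(Lsum n1 n3 (2 * p).+1) Lsum_pairs //.
set cst := if n3 %% n1 <= n1 - n3 %% n1 then n3 %/ n1 else (n3 %/ n1).+1.
rewrite (eq_big_nat _ _ (F2 := fun=> cst)); last first.
  move=> j hj; rewrite /ell -/p /mr /mq.
  by have -> : (j <= 2 * p) = false by lia.
rewrite sum_nat_const_nat.
have hd := divn_eq n3 n1.
have hm := ltn_pmod n3 n1p.
rewrite /cst /p /npairs /mr /mq.
move: hd hm.
set q := n3 %/ n1; set r := n3 %% n1.
case: ifP => h hd hm.
  have -> : n1.+1 - (2 * r).+1 = n1 - 2 * r by lia.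
  rewrite hd; nia.
have -> : n1.+1 - (2 * (n1 - r)).+1 = n1 - 2 * (n1 - r) by lia.
rewrite hd; nia.
Qed.

Lemma block_exists n1 n3 c : 0 < n1 -> 0 < c <= n3 -> exists i, in_block n1 n3 i c.
Proof.
move=> n1p hc.
suff H : forall m, m <= n1 -> c <= Lsum n1 n3 m.+1 ->
  exists i, [/\ 0 < i <= m, Lsum n1 n3 i < c & c <= Lsum n1 n3 i + ell n1 n3 i].
  have [|i [h1 h2 h3]] := H n1 (leqnn _); first by rewrite Lsum_total //; lia.
  exists i; rewrite /in_block; apply/andP; split; apply/andP; split => //; lia.
elim => [|m IH] hm hcm.
  by move: hcm; rewrite Lsum1; lia.
case: (leqP c (Lsum n1 n3 m.+1)) => h.
  have [i [h1 h2 h3]] := IH (ltnW hm) h.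
  by exists i; split => //; lia.
exists m.+1; split => //; last by rewrite -Lsum_rec. by rewrite ltn0Sn leqnn.
Qed.


Lemma count_or (T : Type) (a b : pred T) s :
  count (fun x => a x || b x) s <= count a s + count b s.
Proof. elim: s => //= x s IH; case: (a x); case: (b x) => /=; lia. Qed.

Lemma count_triple (P : pred nat) n : 3 <= count P (iota 1 n) ->
  exists a b d, [/\ a < b, b < d, P a, P b & P d].
Proof.
rewrite -size_filter.
have : sorted ltn (filter P (iota 1 n)).
  by apply: sorted_filter; [exact: ltn_trans | exact: iota_ltn_sorted].
have : forall x, x \in filter P (iota 1 n) -> P x by move=> x; rewrite mem_filter => /andP[].
case: (filter P _) => [|a [|b [|d t]]] //= hP.
move=> /andP[ab /andP[bd _]] _.
exists a, b, d; split => //; apply: hP; rewrite !inE eqxx ?orbT //.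
Qed.

Lemma count_le2 (P : pred nat) n :
  (forall a b d, a < b -> b < d -> P a -> P b -> P d -> False) ->
  count P (iota 1 n) <= 2.
Proof.
move=> H; case: (leqP (count P (iota 1 n)) 2) => // h.
by have [a [b [d [? ? ? ? ?]]]] := count_triple h; exfalso; apply: (H a b d).
Qed.

Lemma dom_generic n1 n2 n3 (YL YR : nat -> nat) (W : vtx -> Prop) :
  3 <= n1 -> 6 <= n3 ->
  (forall c, 0 < c <= n3 -> exists i, in_block n1 n3 i c) ->
  (forall c, 0 < c <= n3 -> YL c <> YR c) ->
  (forall c, 0 < c <= n3 -> (0 < YL c <= n2) && (0 < YR c <= n2)) ->
  (forall i y, count (fun c => in_block n1 n3 i c && (YL c == y)) (iota 1 n3) <= 2) ->
  (forall i y, count (fun c => in_block n1 n3 i c && (YR c == y)) (iota 1 n3) <= 2) ->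
  (forall v, W v <-> cone_set n1 n3 YL YR v) ->
  total_dominating n1 n2 n3 W /\
  total_dominating n1.+1 n2.+1 n3.+1 (fun v => W v \/ v = (n1.+1, n2.+1, n3.+1)).
Proof.
move=> n1g n3g hblk hne hrng hcL hcR hW.
have Wv : forall v, W v -> is_vertex n1 n2 n3 v.
  move=> v /hW; rewrite /cone_set => -[c [i [hc [hb [->|->]]]]]; move: (hrng c hc) hb;
  rewrite /is_vertex /in_block /=; first by move=> h1 h2; split; lia.
  by case: ifP => [/eqP->|/negbT/eqP ne] h1 h2; split; lia.
have key : forall x y z, exists w, W w /\ adj (x, y, z) w.
  move=> x y z.
  pose px := if x == 1 then n1 else x.-1.
  pose fl := fun c => (in_block n1 n3 x c && (YR c == y)) || (in_block n1 n3 px c && (YL c == y)).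
  pose P := fun c => fl c || (c == z).
  have c1 : count P (iota 1 n3) <= 5.
    apply: leq_trans (count_or _ _ _) _.
    have : count (fun c => c == z) (iota 1 n3) <= 1.
      by have := count_uniq_mem z (iota_uniq 1 n3); rewrite /= => ->; case: (_ \in _).
    have := leq_trans (count_or _ _ _) (leq_add (hcR x y) (hcL px y)).
    by move=> h1 h2; apply: leq_trans (leq_add h1 h2) _.
  have : has (predC P) (iota 1 n3).
    by rewrite has_count; have := count_predC P (iota 1 n3); rewrite size_iota; lia.
  move=> /hasP [c]; rewrite mem_iota /P /fl /= => hc hnP.
  have hc' : 0 < c <= n3 by lia.
  have [i hb] := hblk c hc'.
  pose i' := if i == n1 then 1 else i.+1.
  have hi : 0 < i <= n1 by move: hb; rewrite /in_block => /andP[].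
  have hii : i != i' by rewrite /i'; case: ifP => /eqP; lia.
  have hcz : c != z by move: hnP; case: (c == z); rewrite ?orbT.
  have [hl|hl] := boolP ((i != x) && (YL c != y)).
    exists (i, YL c, c); split.
      by apply/hW; exists c, i; split => //; split => //; left.
    by move: hl hcz => /andP[/eqP ? /eqP ?] /eqP ?; split => //= ?; subst.
  have [hr|hr] := boolP ((i' != x) && (YR c != y)).
    exists (i', YR c, c); split.
      by apply/hW; exists c, i; split => //; split => //; right.
    by move: hr hcz => /andP[/eqP ? /eqP ?] /eqP ?; split => //= ?; subst.
  exfalso; move: hl hr; rewrite !negb_and !negbK.
  case/orP => [/eqP eix|/eqP eyl].
    case/orP => [/eqP ei'|/eqP eyr].
      by move: hii; rewrite eix ei' eqxx.
    by move: hnP; rewrite -eix hb eyr eqxx.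
  case/orP => [/eqP ei'|/eqP eyr].
    have epx : px = i.
      move: ei'; rewrite /px /i'; case: ifP => [/eqP ein <-|_ <-] /=; first by rewrite ein.
      by rewrite eqSS; have -> : (i == 0) = false by lia.
    by move: hnP; rewrite epx hb eyl eqxx !orbT.
  by apply: (hne c hc'); rewrite eyl eyr.
split; split => //.
- by move=> [[x y] z] _; apply: key.
- by move=> v [/Wv [h1 h2 h3]|->]; split; rewrite /=; lia.
- move=> [[x y] z] _; have [w [hw ha]] := key x y z; exists w; split => //; by left.
Qed.


Lemma gap f m n : 0 < f -> m < n -> m %% f = n %% f -> m + f <= n.
Proof.
move=> fp mn.
have [k ->] : exists k, n = m + k.+1 by exists (n - m).-1; lia.
move=> e.
have : (m + k.+1 == m + 0 %[mod f]) by rewrite addn0 e.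
rewrite eqn_modDl mod0n => h. have := dvdn_leq (ltn0Sn k) h. lia.
Qed.

Lemma block_len n1 n3 i a d : in_block n1 n3 i a -> in_block n1 n3 i d ->
  d <= a + n3 %/ n1.
Proof.
rewrite /in_block => /andP[_ /andP[h1 h2]] /andP[_ /andP[h3 h4]].
have := ell_bounds n1 n3 i; lia.
Qed.

Lemma block_pos n1 n3 i a : in_block n1 n3 i a -> 0 < a.
Proof. rewrite /in_block => /andP[_ /andP[h1 h2]]; lia. Qed.

Lemma triple_mod n1 n3 i (g : nat -> nat) f a b d :
  0 < f -> n3 %/ n1 <= f -> a < b -> b < d ->
  in_block n1 n3 i a -> in_block n1 n3 i d ->
  g a < g b -> g b < g d -> g a %% f = g b %% f -> g b %% f = g d %% f ->
  g d <= g a + (d - a) -> False.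
Proof.
move=> fp qf ab bd ha hd gab gbd e1 e2 hg.
have := gap fp gab e1; have := gap fp gbd e2.
have := block_len ha hd; lia.
Qed.

Lemma cnt_step (p : pred nat) a b : 0 < a -> a < b -> p a ->
  count p (iota 1 a.-1) < count p (iota 1 b.-1) <=
  count p (iota 1 a.-1) + (b - a).
Proof.
move=> a0 ab pa.
have -> : b.-1 = a.-1 + (b - a) by lia.
rewrite iotaD count_cat.
have -> : 1 + a.-1 = a by lia.
have -> : b - a = (b - a - 1).+1 by lia.
rewrite /= pa /=.
have := count_size p (iota a.+1 (b - a - 1)); rewrite size_iota; lia.
Qed.

Lemma even_props n1 n2 n3 : 3 <= n1 -> 3 <= n2 -> n1 <= n3 -> ~~ odd n2 ->
  2 * n3 <= n1 * n2 ->
  [/\ (forall c, 0 < c <= n3 -> yL_even n2 c <> yR_even n2 c),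
      (forall c, 0 < c <= n3 -> (0 < yL_even n2 c <= n2) && (0 < yR_even n2 c <= n2)),
      (forall i y, count (fun c => in_block n1 n3 i c && (yL_even n2 c == y)) (iota 1 n3) <= 2) &
      (forall i y, count (fun c => in_block n1 n3 i c && (yR_even n2 c == y)) (iota 1 n3) <= 2)].
Proof.
move=> h1 h2 h13 ev hn.
have e2 : n2 = 2 * hh n2.
  rewrite /hh divn2; have := odd_double_half n2; rewrite (negbTE ev) -muln2; lia.
have hp : 0 < hh n2 by lia.
have qh : n3 %/ n1 <= hh n2.
  have := leq_trunc_div n3 n1.
  rewrite -(leq_pmul2r (_ : 0 < n1)); last by lia.
  nia.
have md : forall c, c.-1 %% hh n2 < hh n2 by move=> c; apply: ltn_pmod.
have trip : forall i y (Y : nat -> nat),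
   (forall c c', Y c = Y c' -> c.-1 %% hh n2 = c'.-1 %% hh n2) ->
   count (fun c => in_block n1 n3 i c && (Y c == y)) (iota 1 n3) <= 2.
  move=> i y Y hY; apply: count_le2 => a b d ab bd /andP[ha /eqP ya] /andP[hb /eqP yb] /andP[hd /eqP yd].
  have a0 := block_pos ha.
  apply: (triple_mod (g := predn) hp qh ab bd ha hd); try (simpl; lia).
  - by apply: hY; rewrite ya yb.
  - by apply: hY; rewrite yd yb.
split.
- by move=> c _; rewrite /yL_even /yR_even; have := md c; lia.
- by move=> c _; rewrite /yL_even /yR_even; have := md c; lia.
- by move=> i y; apply: trip => c c'; rewrite /yL_even => -[].
- by move=> i y; apply: trip => c c'; rewrite /yR_even => /eqP; rewrite eqn_add2l => /eqP [].
Qed.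

Lemma triple_shape n1 n3 i f N base (s : pred nat) (Y : nat -> nat) a b d :
  0 < f -> n3 %/ n1 <= f -> base + f < N ->
  (forall c, Y c = if s c then N else base + (count (fun c' => ~~ s c') (iota 1 c.-1) %% f).+1) ->
  (forall c c', in_block n1 n3 i c -> in_block n1 n3 i c' -> s c -> s c' -> c = c') ->
  a < b -> b < d -> in_block n1 n3 i a -> in_block n1 n3 i b -> in_block n1 n3 i d ->
  Y a = Y b -> Y b = Y d -> False.
Proof.
move=> fp qf bN hY hs ab bd ha hb hd.
have md : forall c, count (fun c' => ~~ s c') (iota 1 c.-1) %% f < f by move=> c; apply: ltn_pmod.
rewrite !hY.
case: (boolP (s a)) => sa; case: (boolP (s b)) => sb; case: (boolP (s d)) => sd;
  try (by have := md a; have := md b; have := md d; lia).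
- by move=> _ _; have := hs a b ha hb sa sb; lia.
- move=> /eqP; rewrite eqn_add2l eqSS => /eqP e1 /eqP; rewrite eqn_add2l eqSS => /eqP e2.
  have a0 := block_pos ha.
  have := cnt_step (p := fun c' => ~~ s c') a0 ab sa.
  have := cnt_step (p := fun c' => ~~ s c') (ltn_trans a0 ab) bd sb.
  have := cnt_step (p := fun c' => ~~ s c') a0 (ltn_trans ab bd) sa.
  set ga := count _ (iota 1 a.-1); set gb := count _ (iota 1 b.-1); set gd := count _ (iota 1 d.-1).
  move=> h3 h2 h1.
  have := gap fp (_ : ga < gb) e1; have := gap fp (_ : gb < gd) e2.
  have := block_len ha hd.
  lia.
Qed.

Lemma sblk_in n1 n3 j : 0 < j <= n1 -> 0 < ell n1 n3 j -> in_block n1 n3 j (sblk n1 n3 j).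
Proof. move=> hj he; rewrite /in_block /sblk hj /=; lia. Qed.

Lemma sblk1_in n1 n3 j : 0 < j <= n1 -> 1 < ell n1 n3 j -> in_block n1 n3 j (sblk n1 n3 j).+1.
Proof. move=> hj he; rewrite /in_block /sblk hj /=; lia. Qed.

Lemma inS_big n1 n2 n3 c : 2 <= kk n1 n2 n3 -> inS n1 n2 n3 c ->
  exists j, [/\ 0 < j <= n1, ff n2 < ell n1 n3 j & c = sblk n1 n3 j].
Proof.
move=> hk; rewrite /inS hk => /hasP [j]; rewrite mem_iota => hj /andP[he /eqP ->].
exists j; split => //; lia.
Qed.

Lemma inS_small n1 n2 n3 c : kk n1 n2 n3 < 2 -> inS n1 n2 n3 c -> c = 1.
Proof. by move=> hk; rewrite /inS leqNgt hk => /eqP. Qed.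

Lemma inS_uniq n1 n2 n3 i c c' : in_block n1 n3 i c -> in_block n1 n3 i c' ->
  inS n1 n2 n3 c -> inS n1 n2 n3 c' -> c = c'.
Proof.
move=> hc hc'; case: (leqP 2 (kk n1 n2 n3)) => hk; last first.
  by move=> /(inS_small hk) -> /(inS_small hk) ->.
move=> /(inS_big hk) [j [hj hej ec]] /(inS_big hk) [j' [hj' hej' ec']].
subst c c'.
have e1 := block_uniq hc (sblk_in hj (leq_ltn_trans (leq0n _) hej)).
have e2 := block_uniq hc' (sblk_in hj' (leq_ltn_trans (leq0n _) hej')).
by rewrite -e1 -e2.
Qed.

Lemma inS1_uniq n1 n2 n3 i c c' : 0 < ff n2 -> in_block n1 n3 i c -> in_block n1 n3 i c' ->
  inS1 n1 n2 n3 c -> inS1 n1 n2 n3 c' -> c = c'.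
Proof.
move=> fp hc hc'; rewrite /inS1.
case: (leqP 2 (kk n1 n2 n3)) => hk; last first.
  by move=> /andP[h1 /(inS_small hk) e1] /andP[h2 /(inS_small hk) e2]; lia.
move=> /andP[h1 /(inS_big hk) [j [hj hej e]]] /andP[h2 /(inS_big hk) [j' [hj' hej' e']]].
have ec : c = (sblk n1 n3 j).+1 by lia.
have ec' : c' = (sblk n1 n3 j').+1 by lia.
have b1 : in_block n1 n3 j c by rewrite ec; apply: sblk1_in => //; lia.
have b2 : in_block n1 n3 j' c' by rewrite ec'; apply: sblk1_in => //; lia.
have e1 := block_uniq hc b1.
have e2 := block_uniq hc' b2.
by rewrite ec ec' -e1 -e2.
Qed.

Lemma inS_inS1 n1 n2 n3 c : 0 < ff n2 -> inS n1 n2 n3 c -> inS1 n1 n2 n3 c -> False.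
Proof.
move=> fp hS; rewrite /inS1 => /andP[h1 hS1].
case: (leqP 2 (kk n1 n2 n3)) => hk; last first.
  by move: hS hS1 => /(inS_small hk) e /(inS_small hk); lia.
move: hS hS1 => /(inS_big hk) [j [hj hej e]] /(inS_big hk) [j' [hj' hej' e']].
have b1 : in_block n1 n3 j c by rewrite e; apply: sblk_in => //; lia.
have b2 : in_block n1 n3 j' c.
  have -> : c = (sblk n1 n3 j').+1 by lia.
  by apply: sblk1_in => //; lia.
have := block_uniq b1 b2 => ejj.
by move: e e'; rewrite ejj; lia.
Qed.

Lemma odd_basics n1 n2 n3 : 3 <= n1 -> 3 <= n2 -> odd n2 -> 2 * n3 <= n1 * n2 ->
  [/\ n2 = 2 * ff n2 + 1, 0 < ff n2 & n3 %/ n1 <= ff n2].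
Proof.
move=> h1 h2 od hn.
have e2 : n2 = 2 * ff n2 + 1.
  rewrite /ff -(odd_halfK od) divn2 doubleK; have := odd_halfK od; rewrite -muln2; lia.
split => //; first by lia.
have := leq_trunc_div n3 n1.
rewrite -(leq_pmul2r (_ : 0 < n1)); last by lia.
nia.
Qed.

Lemma c0_not_inS1 n1 n2 n3 x0 c0 : kk n1 n2 n3 < 2 -> 3 <= n1 -> n1 <= n3 ->
  in_block n1 n3 x0 c0 -> x0 \notin [:: 1; 2; n1] -> ~~ inS1 n1 n2 n3 c0.
Proof.
move=> hk h1 h13 hb hx; apply/negP; rewrite /inS1 => /andP[h /(inS_small hk) e].
have e2 : c0 = 2 by lia.
move: hb hx; rewrite e2 /in_block !inE => /andP[/andP[x1 x2] /andP[l1 l2]] hx.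
case: (ltnP x0 3) => x3.
  have : (x0 = 1) \/ (x0 = 2) by lia.
  by case=> ex; move: hx; rewrite ex eqxx ?orbT.
have := Lsum_mono n1 n3 (isT : 0 < 3) x3.
rewrite Lsum_rec // Lsum_rec // Lsum1.
have := ell_bounds n1 n3 1; have := ell_bounds n1 n3 2.
have : 0 < n3 %/ n1 by rewrite divn_gt0; lia.
lia.
Qed.

Lemma odd_props n1 n2 n3 : 3 <= n1 -> 3 <= n2 -> n1 <= n3 -> odd n2 ->
  2 * n3 <= n1 * n2 ->
  (forall c, 0 < c <= n3 -> ~~ inS n1 n2 n3 c -> yL_odd n1 n2 n3 c <= ff n2) /\
      (forall c, 0 < yL_odd n1 n2 n3 c <= n2) /\
      (forall c, yL_odd n1 n2 n3 c = n2 -> inS n1 n2 n3 c) /\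
      (forall c, ~~ inS1 n1 n2 n3 c -> ff n2 < yR_odd n1 n2 n3 c < n2) /\
      (forall c, 0 < yR_odd n1 n2 n3 c <= n2) /\
      (forall c, 0 < c <= n3 -> yL_odd n1 n2 n3 c <> yR_odd n1 n2 n3 c) /\
      (forall i a b d, a < b -> b < d -> in_block n1 n3 i a -> in_block n1 n3 i b ->
         in_block n1 n3 i d -> yL_odd n1 n2 n3 a = yL_odd n1 n2 n3 b ->
         yL_odd n1 n2 n3 b = yL_odd n1 n2 n3 d -> False) /\
      (forall i y, count (fun c => in_block n1 n3 i c && (yR_odd n1 n2 n3 c == y)) (iota 1 n3) <= 2).
Proof.
move=> h1 h2 h13 od hn.
have [e2 fp qf] := odd_basics h1 h2 od hn.
have mdL : forall c, count (fun c' => ~~ inS n1 n2 n3 c') (iota 1 c.-1) %% ff n2 < ff n2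
  by move=> c; apply: ltn_pmod.
have mdR : forall c, count (fun c' => ~~ inS1 n1 n2 n3 c') (iota 1 c.-1) %% ff n2 < ff n2
  by move=> c; apply: ltn_pmod.
have rL : forall c, ~~ inS n1 n2 n3 c -> yL_odd n1 n2 n3 c <= ff n2.
  by move=> c hc; rewrite /yL_odd (negbTE hc); have := mdL c; lia.
have rR : forall c, ~~ inS1 n1 n2 n3 c -> ff n2 < yR_odd n1 n2 n3 c < n2.
  by move=> c hc; rewrite /yR_odd (negbTE hc); have := mdR c; lia.
have yLn : forall c, yL_odd n1 n2 n3 c = n2 -> inS n1 n2 n3 c.
  move=> c; case: (boolP (inS n1 n2 n3 c)) => // hc; have := rL c hc; lia.
split; [|split; [|split; [|split; [|split; [|split; [|split]]]]]] => //.
- by move=> c _; apply: rL.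
- move=> c; rewrite /yL_odd; case: ifP => _; first lia; have := mdL c; lia.
- move=> c; rewrite /yR_odd; case: ifP => _; first lia; have := mdR c; lia.
- move=> c _; case: (boolP (inS n1 n2 n3 c)) => hS.
    case: (boolP (inS1 n1 n2 n3 c)) => hS1; first by have := inS_inS1 fp hS hS1.
    rewrite /yL_odd hS; have := rR c hS1; lia.
  case: (boolP (inS1 n1 n2 n3 c)) => hS1.
    rewrite /yR_odd hS1; have := rL c hS; lia.
  have := rL c hS; have := rR c hS1; lia.
- move=> i a b d ab bd ha hb hd.
  apply: (triple_shape (base := 0) (N := n2) (s := inS n1 n2 n3) fp qf _ _ _ ab bd ha hb hd).
  + lia.
  + by move=> c; rewrite /yL_odd add0n.
  + by move=> c c' hc hc'; exact: inS_uniq hc hc'.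
- move=> i y; apply: count_le2 => a b d ab bd /andP[ha /eqP ya] /andP[hb /eqP yb] /andP[hd /eqP yd].
  apply: (triple_shape (base := ff n2) (N := n2) (s := inS1 n1 n2 n3) (Y := yR_odd n1 n2 n3) fp qf _ _ _ ab bd ha hb hd).
  + lia.
  + by move=> c; rewrite /yR_odd.
  + by move=> c c' hc hc'; exact: inS1_uniq fp hc hc'.
  + by rewrite ya yb.
  + by rewrite yb yd.
Qed.

Unset Implicit Arguments. Set Strict Implicit.

Theorem mainTheorem11 (n1 n2 n3 : nat) (W : vtx -> Prop) :
  3 <= n1 -> 3 <= n2 -> n1 <= n3 -> n2 <= n3 ->
  3 * maxn n1 n2 <= 2 * n3 -> 2 * n3 <= n1 * n2 ->
  middle_cone n1 n2 n3 W ->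
  total_dominating n1 n2 n3 W /\
  total_dominating n1.+1 n2.+1 n3.+1
    (fun v => W v \/ v = (n1.+1, n2.+1, n3.+1)).
Proof.
move=> h1 h2 h13 h23 hmax hn.
have n3g : 6 <= n3.
  case: (leqP 6 n3) => // h.
  have : n1 <= 3 /\ n2 <= 3 by lia.
  case=> a b; have e1 : n1 = 3 by lia. have e2 : n2 = 3 by lia.
  by move: hn hmax; rewrite e1 e2; lia.
have hblk : forall c, 0 < c <= n3 -> exists i, in_block n1 n3 i c.
  by move=> c hc; apply: block_exists => //; lia.
rewrite /middle_cone; case: ifP => hev.
  have [p1 p2 p3 p4] := even_props h1 h2 h13 hev hn.
  by move=> hW; apply: (dom_generic h1 n3g hblk p1 p2 p3 p4 hW).
have od : odd n2 by move: hev; case: (odd n2).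
have [rL [rgL [yLn [rR [rgR [hne [trL cR]]]]]]] := odd_props h1 h2 h13 od hn.
have [e2 fp qf] := odd_basics h1 h2 od hn.
have cL : forall i y, count (fun c => in_block n1 n3 i c && (yL_odd n1 n2 n3 c == y)) (iota 1 n3) <= 2.
  move=> i y; apply: count_le2 => a b d ab bd /andP[ha /eqP ya] /andP[hb /eqP yb] /andP[hd /eqP yd].
  by apply: (trL i a b d ab bd ha hb hd); rewrite ?ya ?yb ?yd.
case: ifP => hk.
  move=> hW; apply: (dom_generic h1 n3g hblk hne _ cL cR hW).
  by move=> c _; rewrite rgL rgR.
have hk' : kk n1 n2 n3 < 2 by move: hk; case: leqP.
move=> [c0 [x0 [hc0 hb0 hy0 hx0 hW]]].
have nS1 := c0_not_inS1 hk' h1 h13 hb0 hx0.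
apply: (dom_generic h1 n3g hblk _ _ _ cR hW).
- move=> c hc /=; case: ifP => [/eqP ->|_]; last exact: hne.
  by have := rR c0 nS1; lia.
- move=> c _ /=; rewrite rgR andbT; case: ifP => _ //; lia.
- move=> i y; apply: count_le2 => a b d ab bd /andP[ha /eqP ya] /andP[hb /eqP yb] /andP[hd /eqP yd].
  move: ya yb yd => /=.
  have k1 : forall c, (if c == c0 then n2 else yL_odd n1 n2 n3 c) = n2 -> c = c0 \/ c = 1.
    move=> c; case: ifP => [/eqP -> _|_ /yLn /(inS_small hk') ->]; by [left|right].
  case: (eqVneq y n2) => [->|yn].
    by move=> /k1 ? /k1 ? /k1 ?; lia.
  have [ac|ac] := eqVneq a c0; first by subst a; rewrite ?eqxx => /esym/eqP; rewrite (negbTE yn).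
  have [bc|bc] := eqVneq b c0; first by subst b; rewrite ?eqxx => _ /esym/eqP; rewrite (negbTE yn).
  have [dc|dc] := eqVneq d c0; first by subst d; rewrite ?eqxx => _ _ /esym/eqP; rewrite (negbTE yn).
  rewrite ?(negbTE ac) ?(negbTE bc) ?(negbTE dc) => ya yb yd.
  by apply: (trL i a b d ab bd ha hb hd); rewrite ?ya ?yb ?yd.
Qed.
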